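(* Let $\mathbf{u}=(u_1,u_2)\in\mathbb{R}[x_1,x_2]_d^2$ and $p\in\Sigma[x_1,x_2]_{2d}$, and suppose $\nabla f_p(\mathbf{u})=0$ and $\nabla^2 f_p(\mathbf{u})\succeq 0$. If $$p\in\operatorname{im}(\mathcal{A}_{\mathbf{u}})+\operatorname{cone}\big(\sigma(\ker(\mathcal{A}_{\mathbf{u}}))\big),$$ then $f_p(\mathbf{u})=0$.
   Context: $\mathbb{R}[x_1,x_2]_n$ denotes the space of real binary forms of degree $n$, and $\Sigma[x_1,x_2]_{2d}$ the cone of sums of squares of binary forms of degree $d$. $\mathcal{A}_{\mathbf{u}}:\mathbb{R}[x_1,x_2]_d^2\to\mathbb{R}[x_1,x_2]_{2d}$ is the linear map $(v_1,v_2)\mapsto u_1v_1+u_2v_2$, and $\sigma:\mathbb{R}[x_1,x_2]_d^2\to\mathbb{R}[x_1,x_2]_{2d}$ is $(v_1,v_2)\mapsto v_1^2+v_2^2$; $\operatorname{cone}(S)$ is the convex cone generated by $S$ (nonnegative combinations). Fix any inner product $\langle\cdot,\cdot\rangle$ on $\mathbb{R}[x_1,x_2]_{2d}$ with norm $\|\cdot\|$ and let $f_p(\mathbf{u})=\|\sigma(\mathbf{u})-p\|^2$. Derivatives are with respect to the vector space $\mathbb{R}[x_1,x_2]_d^2$: $\nabla f_p(\mathbf{u})=0$ means $\langle\mathcal{A}_{\mathbf{u}}(\mathbf{v}),\sigma(\mathbf{u})-p\rangle=0$ for all $\mathbf{v}$, and $\nabla^2 f_p(\mathbf{u})\succeq0$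 means $\langle\sigma(\mathbf{v}),\sigma(\mathbf{u})-p\rangle+2\|\mathcal{A}_{\mathbf{u}}(\mathbf{v})\|^2\ge0$ for all $\mathbf{v}\in\mathbb{R}[x_1,x_2]_d^2$. *)

(* Defs.v *)
From HB Require Import structures.
From mathcomp Require Import all_boot all_order all_algebra.
From mathcomp Require Import reals.
From mathcomp Require Import mpoly.
Set Implicit Arguments. Unset Strict Implicit. Unset Printing Implicit Defensive.
Import Order.TTheory GRing.Theory Num.Theory.
Local Open Scope ring_scope.

(* Binary forms: elements of {mpoly R[2]} (variables x_1, x_2).
   R[x1,x2]_n is the subspace of polynomials homogeneous of degree n
   (the zero polynomial included). *)
Definition bform (R : realType) (n : nat) (p : {mpoly R[2]}) : Prop :=
  p \is n.-homog.

(* An inner product on R[x1,x2]_n, given as a function on {mpoly R[2]}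
   whose behaviour is only constrained on forms of degree n. *)
Definition is_inner_product (R : realType) (n : nat)
    (ip : {mpoly R[2]} -> {mpoly R[2]} -> R) : Prop :=
  [/\ (forall p q, bform n p -> bform n q -> ip p q = ip q p),
      (forall (a : R) p q r, bform n p -> bform n q -> bform n r ->
         ip (a *: p + q) r = a * ip p r + ip q r)
    & (forall p, bform n p -> p != 0 -> 0 < ip p p)].

Definition A_op (R : realType) (u1 u2 v1 v2 : {mpoly R[2]}) : {mpoly R[2]} :=
  u1 * v1 + u2 * v2.

Definition sigma_op (R : realType) (v1 v2 : {mpoly R[2]}) : {mpoly R[2]} :=
  v1 ^+ 2 + v2 ^+ 2.

Definition f_p (R : realType) (ip : {mpoly R[2]} -> {mpoly R[2]} -> R)
    (p u1 u2 : {mpoly R[2]}) : R :=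
  ip (sigma_op u1 u2 - p) (sigma_op u1 u2 - p).

Definition is_sos (R : realType) (d : nat) (p : {mpoly R[2]}) : Prop :=
  exists s : seq {mpoly R[2]},
    (forall q, q \in s -> bform d q) /\ p = \sum_(q <- s) q ^+ 2.

Definition grad_zero (R : realType) (d : nat)
    (ip : {mpoly R[2]} -> {mpoly R[2]} -> R) (p u1 u2 : {mpoly R[2]}) : Prop :=
  forall v1 v2, bform d v1 -> bform d v2 ->
    ip (A_op u1 u2 v1 v2) (sigma_op u1 u2 - p) = 0.

Definition hess_psd (R : realType) (d : nat)
    (ip : {mpoly R[2]} -> {mpoly R[2]} -> R) (p u1 u2 : {mpoly R[2]}) : Prop :=
  forall v1 v2, bform d v1 -> bform d v2 ->
    0 <= ip (sigma_op v1 v2) (sigma_op u1 u2 - p)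
         + 2 * ip (A_op u1 u2 v1 v2) (A_op u1 u2 v1 v2).

(* p in im(A_u) + cone(sigma(ker A_u)):
   p = A_u(w) + sum_i c_i sigma(k_i) with w in R[x]_d^2, c_i >= 0,
   k_i in R[x]_d^2 with A_u(k_i) = 0 (finite nonnegative combination). *)
Definition in_im_plus_cone (R : realType) (d : nat)
    (p u1 u2 : {mpoly R[2]}) : Prop :=
  exists (w1 w2 : {mpoly R[2]})
         (s : seq (R * ({mpoly R[2]} * {mpoly R[2]}))),
    [/\ bform d w1, bform d w2,
        (forall t, t \in s ->
           [/\ 0 <= t.1, bform d t.2.1, bform d t.2.2
             & A_op u1 u2 t.2.1 t.2.2 = 0])
      & p = A_op u1 u2 w1 w2
            + \sum_(t <- s) t.1 *: sigma_op t.2.1 t.2.2].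

(* Main.v *)
Require Import Defs.
From HB Require Import structures.
From mathcomp Require Import all_boot all_order all_algebra.
From mathcomp Require Import reals.
From mathcomp Require Import mpoly.
Import Order.TTheory GRing.Theory Num.Theory.
Local Open Scope ring_scope.

Theorem proposition4p2 (R : realType) (d : nat)
    (ip : {mpoly R[2]} -> {mpoly R[2]} -> R)
    (u1 u2 p : {mpoly R[2]}) :
  is_inner_product (2 * d) ip ->
  bform d u1 -> bform d u2 ->
  is_sos d p ->
  grad_zero d ip p u1 u2 ->
  hess_psd d ip p u1 u2 ->
  in_im_plus_cone d p u1 u2 ->
  f_p ip p u1 u2 = 0.
Proof.
rewrite /is_inner_product /in_im_plus_cone.
move=> H1 hu1 hu2 _ hgrad hhess H2.
case: H1 => ipC ipL ipP.
case: H2 => w1 [w2 [s [hw1 hw2 hs Ep]]].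
subst p.
have hA : forall a1 a2 v1 v2 : {mpoly R[2]}, bform d a1 -> bform d a2 -> bform d v1 ->
    bform d v2 -> bform (2 * d) (A_op a1 a2 v1 v2).
  move=> a1 a2 v1 v2 ha1 ha2 hv1 hv2; rewrite /bform /A_op mul2n -addnn.
  by apply: rpredD; apply: dhomogM.
have hsig : forall v1 v2 : {mpoly R[2]}, bform d v1 -> bform d v2 ->
    bform (2 * d) (sigma_op v1 v2).
  by move=> v1 v2 h1 h2; have := hA _ _ _ _ h1 h2 h1 h2;
     rewrite /A_op /sigma_op !expr2.
have h0 : bform (2 * d) (0 : {mpoly R[2]}) by rewrite /bform; exact: rpred0.
have ip0 : forall r : {mpoly R[2]}, bform (2 * d) r -> ip 0 r = 0.
  move=> r hr; have := ipL 1 0 0 r h0 h0 hr.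
  rewrite scale1r addr0 mul1r => /(congr1 (fun x => x - ip 0 r)).
  by rewrite subrr addrK => H; rewrite -H.
set S := \sum_(t <- s) t.1 *: sigma_op t.2.1 t.2.2.
have hSg : forall s' : seq (R * ({mpoly R[2]} * {mpoly R[2]})),
    (forall t, t \in s' ->
           [/\ 0 <= t.1, bform d t.2.1, bform d t.2.2
             & A_op u1 u2 t.2.1 t.2.2 = 0]) ->
    bform (2 * d) (\sum_(t <- s') t.1 *: sigma_op t.2.1 t.2.2).
  elim=> [|t s' IH] hs'; first by rewrite big_nil.
  rewrite big_cons; apply: rpredD.
    have [_ h1 h2 _] := hs' t (mem_head _ _).
    by apply: rpredZ; apply: hsig.
  by apply: IH => t' ht'; apply: hs'; rewrite in_cons ht' orbT.
have hS : bform (2 * d) S := hSg s hs.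
have hAw := hA _ _ _ _ hu1 hu2 hw1 hw2.
set P := A_op u1 u2 w1 w2 + S.
have hP : bform (2 * d) P by apply: rpredD.
set r := sigma_op u1 u2 - P.
have hsu := hsig _ _ hu1 hu2.
have hr : bform (2 * d) r by apply: rpredB.
have ipB : forall x y : {mpoly R[2]}, bform (2 * d) x -> bform (2 * d) y ->
    ip (x - y) r = ip x r - ip y r.
  move=> x y hx hy; have := ipL (-1) y x r hy hx hr.
  by rewrite scaleN1r addrC => ->; rewrite mulN1r addrC.
have ipD : forall x y : {mpoly R[2]}, bform (2 * d) x -> bform (2 * d) y ->
    ip (x + y) r = ip x r + ip y r.
  by move=> x y hx hy; have := ipL 1 x y r hx hy hr; rewrite scale1r mul1r.
have e1 : ip (sigma_op u1 u2) r = 0.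
  have := hgrad u1 u2 hu1 hu2.
  by rewrite /A_op /sigma_op !expr2.
have e2 : ip (A_op u1 u2 w1 w2) r = 0 by exact: hgrad.
have e3 : forall s' : seq (R * ({mpoly R[2]} * {mpoly R[2]})),
    (forall t, t \in s' ->
           [/\ 0 <= t.1, bform d t.2.1, bform d t.2.2
             & A_op u1 u2 t.2.1 t.2.2 = 0]) ->
    bform (2 * d) (\sum_(t <- s') t.1 *: sigma_op t.2.1 t.2.2) /\
    0 <= ip (\sum_(t <- s') t.1 *: sigma_op t.2.1 t.2.2) r.
  elim=> [|t s' IH] hs'; first by rewrite big_nil ip0.
  have [IH1 IH2] : bform (2 * d) (\sum_(t <- s') t.1 *: sigma_op t.2.1 t.2.2) /\
    0 <= ip (\sum_(t <- s') t.1 *: sigma_op t.2.1 t.2.2) r.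
    by apply: IH => t' ht'; apply: hs'; rewrite in_cons ht' orbT.
  have [c0 h1 h2 hk] := hs' t (mem_head _ _).
  have hst := hsig _ _ h1 h2.
  rewrite big_cons; split; first by apply: rpredD => //; apply: rpredZ.
  rewrite ipD //; last by apply: rpredZ.
  apply: addr_ge0 => //.
  rewrite -[t.1 *: _]addr0 ipL //.
  rewrite ip0 // addr0; apply: mulr_ge0 => //.
  have := hhess _ _ h1 h2; rewrite hk ip0 // mulr0 addr0.
  by rewrite /r /P /S.
have [_ e4] := e3 s hs.
have hf : ip r r <= 0.
  rewrite {1}/r ipB // e1 /P ipD // e2 add0r oppr_le0.
  by rewrite add0r; exact: e4.
rewrite /f_p -/P -/r; apply/eqP; rewrite eq_le hf /=.
have [->|nz] := eqVneq r 0; first by rewrite ip0.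
by apply: ltW; apply: ipP.
Qed.
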